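(* Let $A\in\mathbb{R}^{n\times n}$. (a) For every integer $k\ge0$, $(A\,\underline{\otimes}\, I)^k = (I\,\underline{\otimes}\, A)^k = \frac{1}{2^k}\sum_{i=0}^k\binom{k}{i}A^{k-i}\,\underline{\otimes}\, A^i$. (b) $\exp(A\,\underline{\oplus}\, A) = \exp(A)\,\underline{\otimes}\,\exp(A)$. (c) In general $\exp(A\,\underline{\oplus}\, B)\ne\exp(A)\,\underline{\otimes}\,\exp(B)$; i.e., there exist $n$ and $A,B\in\mathbb{R}^{n\times n}$ with $\exp(A\,\underline{\oplus}\, B)\ne\exp(A)\,\underline{\otimes}\,\exp(B)$.
   Context: Let $\underline{n}=n(n+1)/2$, $\operatorname{vec}$ column-stacking vectorization, $\otimes$ the Kronecker product, $e_1,\dots,e_n$ the standard basis. Enumerate pairs $(r,c)$, $1\le r\le c\le n$, in the order $(1,1),\dots,(1,n),(2,2),\dots,(2,n),\dots,(n,n)$ as $(r(\ell),c(\ell))$, $\ell=1,\dots,\underline{n}$; set $E_\ell=e_{r(\ell)}e_{r(\ell)}^T$ if $r(\ell)=c(\ell)$ and $E_\ell=\frac{\sqrt2}{2}(e_{r(\ell)}e_{c(\ell)}^T+e_{c(\ell)}e_{r(\ell)}^T)$ otherwise; $W_n\in\mathbb{R}^{\underline{n}\times n^2}$ has $\ell$-th row $\operatorname{vec}(E_\ell)^T$. The symmetric Kronecker product of $A,B\in\mathbb{R}^{n\times n}$ is $A\,\underline{\otimes}\, B = W_n(A\otimes B)W_n^T\in\mathbb{R}^{\underline{n}\times\underline{n}}$,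 and the symmetric Kronecker sum is $A\,\underline{\oplus}\, B = A\,\underline{\otimes}\, I + I\,\underline{\otimes}\, B$. $\exp$ is the matrix exponential. *)

(* Defs.v *)
From HB Require Import structures.
From mathcomp Require Import all_boot all_order all_algebra.
From mathcomp Require Import all_classical all_reals all_analysis.
Set Implicit Arguments. Unset Strict Implicit. Unset Printing Implicit Defensive.
Import Order.TTheory GRing.Theory Num.Theory.
Local Open Scope ring_scope.

Definition tri (n : nat) : nat := (n * n.+1)./2.

Lemma divn_ord_lt n (p : 'I_(n * n)) : (p %/ n < n)%N.
Proof.
case: n p => [|n] p; first by case: p.
by rewrite ltn_divLR.
Qed.
Lemma modn_ord_lt n (p : 'I_(n * n)) : (p %% n < n)%N.
Proof.
case: n p => [|n] p; first by case: p.
by rewrite ltn_mod.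
Qed.
Definition odiv n (p : 'I_(n * n)) : 'I_n := Ordinal (divn_ord_lt p).
Definition omod n (p : 'I_(n * n)) : 'I_n := Ordinal (modn_ord_lt p).

Section SymKron.
Variable R : realType.

Definition kron n (A B : 'M[R]_n) : 'M[R]_(n * n) :=
  \matrix_(p, q) (A (odiv p) (odiv q) * B (omod p) (omod q)).

(* column-stacking vectorization: vec(X)[r + n*c] = X[r,c] (0-based) *)
Definition vecc n (X : 'M[R]_n) : 'cV[R]_(n * n) :=
  \col_p X (omod p) (odiv p).

Definition sym_pairs (n : nat) : seq (nat * nat) :=
  flatten [seq [seq (r, c) | c <- iota r (n - r)] | r <- iota 0 n].

Definition E_sym n (l : nat) : 'M[R]_n :=
  let rc := nth (0%N, 0%N) (sym_pairs n) l in
  let r := rc.1 in let c := rc.2 in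
  if r == c then \matrix_(i, j) ((i == r :> nat) && (j == r :> nat))%:R
  else \matrix_(i, j) (Num.sqrt 2 / 2 *
        (((i == r :> nat) && (j == c :> nat))%:R
         + ((i == c :> nat) && (j == r :> nat))%:R)).

Definition Wn n : 'M[R]_(tri n, n * n) :=
  \matrix_(l, p) vecc (E_sym n l) p 0.

Definition symkron n (A B : 'M[R]_n) : 'M[R]_(tri n) :=
  Wn n *m kron A B *m (Wn n)^T.

Definition symsum n (A B : 'M[R]_n) : 'M[R]_(tri n) :=
  symkron A 1%:M + symkron 1%:M B.

Definition mexp m (A : 'M[R]_m) : 'M[R]_m :=
  limn (series (fun k : nat => (k`!%:R)^-1 *: A ^+ k)).

End SymKron.

(* Main.v *)
Require Import Defs.
From HB Require Import structures.
From mathcomp Require Import all_boot all_order all_algebra.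
From mathcomp Require Import all_classical all_reals all_analysis.
From mathcomp Require Import zify ring lra.
Import Order.TTheory GRing.Theory Num.Theory numFieldNormedType.Exports.
Set Implicit Arguments. Unset Strict Implicit. Unset Printing Implicit Defensive.
Local Open Scope ring_scope.

Section Idx.
Variable n : nat.

Lemma pk_lt (i j : 'I_n) : (i * n + j < n * n)%N.
Proof. have := ltn_ord i; have := ltn_ord j; nia. Qed.
Definition pk (i j : 'I_n) : 'I_(n * n) := Ordinal (pk_lt i j).

Lemma odiv_pk i j : odiv (pk i j) = i.
Proof.
apply: val_inj => /=; have n0 : (0 < n)%N by case: n i {j} => [[]|].
by rewrite divnMDl // divn_small // addn0.
Qed.
Lemma omod_pk i j : omod (pk i j) = j.
Proof. by apply: val_inj => /=; rewrite modnMDl modn_small. Qed.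
Lemma pk_eta p : pk (odiv p) (omod p) = p.
Proof. by apply: val_inj => /=; rewrite -divn_eq. Qed.

Lemma sum_pk (V : nmodType) (F : 'I_(n * n) -> V) :
  \sum_(p < n * n) F p = \sum_(i < n) \sum_(j < n) F (pk i j).
Proof.
rewrite pair_big /= (reindex (fun ij : 'I_n * 'I_n => pk ij.1 ij.2)) //=.
exists (fun p => (odiv p, omod p)) => [[i j] _|p _] /=.
  by rewrite odiv_pk omod_pk.
by rewrite pk_eta.
Qed.

Definition sw (p : 'I_(n * n)) : 'I_(n * n) := pk (omod p) (odiv p).
Lemma odiv_sw p : odiv (sw p) = omod p. Proof. exact: odiv_pk. Qed.
Lemma omod_sw p : omod (sw p) = odiv p. Proof. exact: omod_pk. Qed.
Lemma swK : involutive sw.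
Proof. by move=> p; rewrite /sw odiv_sw omod_sw pk_eta. Qed.
Lemma sw_inj : injective sw. Proof. exact: inv_inj swK. Qed.
Lemma eq_odiv_omod (p q : 'I_(n * n)) : (p == q) = (odiv p == odiv q) && (omod p == omod q).
Proof.
apply/eqP/andP => [->//|[/eqP e1 /eqP e2]].
by rewrite -(pk_eta p) -(pk_eta q) e1 e2.
Qed.
End Idx.

Section Kron.
Variable R : realType.
Variable n : nat.
Implicit Types A B C D : 'M[R]_n.

Lemma kronE A B p q : kron A B p q = A (odiv p) (odiv q) * B (omod p) (omod q).
Proof. by rewrite mxE. Qed.

Lemma kron_mul A B C D : kron A B *m kron C D = kron (A *m C) (B *m D).
Proof.
apply/matrixP => p q; rewrite !mxE sum_pk big_distrl /=.
apply: eq_bigr => i _; rewrite big_distrr /=; apply: eq_bigr => j _.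
by rewrite !kronE odiv_pk omod_pk; ring.
Qed.

Lemma kron_sw A B p q : kron A B (sw p) (sw q) = kron B A p q.
Proof. by rewrite !kronE !odiv_sw !omod_sw mulrC. Qed.

Lemma kron11 : kron (1%:M : 'M[R]_n) 1%:M = 1%:M.
Proof.
apply/matrixP => p q; rewrite kronE !mxE (eq_odiv_omod p q).
by case: (odiv p == odiv q); case: (omod p == omod q); rewrite /= ?mulr1 ?mulr0.
Qed.

Lemma kronDl A B C : kron (A + B) C = kron A C + kron B C.
Proof. by apply/matrixP => p q; rewrite !mxE mulrDl. Qed.
Lemma kronDr A B C : kron A (B + C) = kron A B + kron A C.
Proof. by apply/matrixP => p q; rewrite !mxE mulrDr. Qed.
Lemma kronZl a A B : kron (a *: A) B = a *: kron A B.
Proof. by apply/matrixP => p q; rewrite !mxE mulrA. Qed.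
Lemma kronZr a A B : kron A (a *: B) = a *: kron A B.
Proof. by apply/matrixP => p q; rewrite !mxE mulrCA. Qed.
Lemma kron0l B : kron 0 B = 0.
Proof. by apply/matrixP => p q; rewrite !mxE mul0r. Qed.
Lemma kron0r A : kron A 0 = 0.
Proof. by apply/matrixP => p q; rewrite !mxE mulr0. Qed.
Lemma kronNl A B : kron (- A) B = - kron A B.
Proof. by apply/matrixP => p q; rewrite !mxE mulNr. Qed.
Lemma kronBl A B C : kron (A - B) C = kron A C - kron B C.
Proof. by rewrite kronDl kronNl. Qed.
Lemma kronNr A B : kron A (- B) = - kron A B.
Proof. by apply/matrixP => p q; rewrite !mxE mulrN. Qed.
Lemma kronBr A B C : kron A (B - C) = kron A B - kron A C.
Proof. by rewrite kronDr kronNr. Qed.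

Lemma kron_suml I (r : seq I) (P : pred I) (F : I -> 'M[R]_n) B :
  kron (\sum_(i <- r | P i) F i) B = \sum_(i <- r | P i) kron (F i) B.
Proof. exact: (big_morph (fun A => kron A B) (fun A C => kronDl A C B) (kron0l B)). Qed.
Lemma kron_sumr I (r : seq I) (P : pred I) (F : I -> 'M[R]_n) A :
  kron A (\sum_(i <- r | P i) F i) = \sum_(i <- r | P i) kron A (F i).
Proof. exact: (big_morph (fun B => kron A B) (fun B C => kronDr A B C) (kron0r A)). Qed.

Lemma kron_expl A k : (kron A 1%:M) ^+ k = kron (A ^+ k) 1%:M.
Proof.
elim: k => [|k IH]; first by rewrite !expr0 kron11.
by rewrite !exprS IH -mulmxE kron_mul mulmx1 mulmxE.
Qed.
Lemma kron_expr A k : (kron 1%:M A) ^+ k = kron 1%:M (A ^+ k).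
Proof.
elim: k => [|k IH]; first by rewrite !expr0 kron11.
by rewrite !exprS IH -mulmxE kron_mul mulmx1 mulmxE.
Qed.
Lemma kron_comm A B : kron A 1%:M *m kron 1%:M B = kron 1%:M B *m kron A 1%:M.
Proof. by rewrite !kron_mul !mulmx1 !mul1mx. Qed.
Lemma kron_split A B : kron A 1%:M *m kron 1%:M B = kron A B.
Proof. by rewrite kron_mul mulmx1 mul1mx. Qed.
End Kron.

Lemma sumn_tri n : (\sum_(0 <= r < n) (n - r))%N = tri n.
Proof.
rewrite big_nat_rev /= add0n.
rewrite (eq_big_nat _ _ (F2 := fun i => i.+1)); last first.
  by move=> i /andP[_ lt]; lia.
have -> : tri n = 'C(n.+1, 2) by rewrite bin2 /= mulnC.
by rewrite -bin2_sum big_nat_recl // add0n.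

Qed.

Lemma sym_pairsE n : sym_pairs n = [seq (r, c) | r <- iota 0 n, c <- iota r (n - r)].
Proof. by []. Qed.

Lemma size_sym n : size (sym_pairs n) = tri n.
Proof.
rewrite sym_pairsE size_allpairs_dep -sumn_tri sumnE big_map.
rewrite /index_iota subn0; apply: eq_bigr => r _; by rewrite size_iota.
Qed.

Lemma mem_sym n x : x \in sym_pairs n -> (x.1 <= x.2 < n)%N.
Proof.
rewrite sym_pairsE => /allpairsPdep [r [c [hr hc ->]]] /=.
move: hr hc; rewrite !mem_iota; lia.
Qed.

Lemma uniq_sym n : uniq (sym_pairs n).
Proof.
rewrite sym_pairsE; apply: allpairs_uniq_dep.
- exact: iota_uniq.
- by move=> r _; exact: iota_uniq.
- by move=> [a b] [c d] _ _ /= [e1 e2]; subst c; rewrite e2.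
Qed.

Section Wsec.
Variable R : realType.

Lemma sum_sym n (F : nat * nat -> R) :
  \sum_(l < tri n) F (nth (0%N, 0%N) (sym_pairs n) l) =
  \sum_(r < n) \sum_(c < n | (r <= c)%N) F (val r, val c).
Proof.
rewrite -(big_mkord xpredT (fun l => F (nth (0%N, 0%N) (sym_pairs n) l))).
rewrite -size_sym -(big_nth (0%N, 0%N) xpredT F) sym_pairsE big_allpairs_dep /=.
have -> : iota 0 n = index_iota 0 n by rewrite /index_iota subn0.
rewrite big_mkord; apply: eq_bigr => r _.
by rewrite -/(index_iota r n) big_geq_mkord.
Qed.

End Wsec.

Section Wsec.
Variable R : realType.

Definition d (a b : nat) : R := (a == b)%:R.
Definition alpha (r c : nat) : R := if r == c then 2^-1 else Num.sqrt 2 / 2.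
Definition Ef (x : nat * nat) (i j : nat) : R :=
  alpha x.1 x.2 * (d i x.1 * d j x.2 + d i x.2 * d j x.1).
Definition pr n (l : 'I_(tri n)) := nth (0%N, 0%N) (sym_pairs n) l.

Lemma dC a b : d a b = d b a. Proof. by rewrite /d eq_sym. Qed.
Lemma bmul (a b : bool) : ((a && b)%:R : R) = a%:R * b%:R.
Proof. by case: a; case: b; rewrite /= ?mulr1 ?mulr0. Qed.

Lemma E_symE n (l : 'I_(tri n)) (i j : 'I_n) : E_sym R n l i j = Ef (pr l) i j.
Proof.
rewrite /E_sym /Ef /pr /alpha; set x := nth _ _ _.
case: eqP => [e|ne]; rewrite mxE /=.
  rewrite -e /d; case: (i == x.1 :> nat); case: (j == x.1 :> nat); rewrite /=; by field.
rewrite /d; case: (i == x.1 :> nat); case: (j == x.1 :> nat);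
  case: (i == x.2 :> nat); case: (j == x.2 :> nat); rewrite /=; ring.
Qed.

Lemma WnE n l p : Wn R n l p = Ef (pr l) (omod p) (odiv p).
Proof. by rewrite /Wn !mxE E_symE. Qed.

Lemma EfC x i j : Ef x i j = Ef x j i.
Proof. rewrite /Ef; ring. Qed.

Lemma Wn_sw n l p : Wn R n l (sw p) = Wn R n l p.
Proof. by rewrite !WnE odiv_sw omod_sw EfC. Qed.

Lemma sum_d n (a : nat) (f : nat -> R) : (a < n)%N ->
  \sum_(i < n) d i a * f i = f a.
Proof.
move=> an; rewrite (bigD1 (Ordinal an)) //= big1 ?addr0.
  by rewrite /d eqxx mul1r.
move=> i /negbTE; rewrite -val_eqE /= /d => ->; by rewrite mul0r.
Qed.

Lemma dd n (a b a' b' : nat) : (a < n)%N -> (b < n)%N ->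
  \sum_(i < n) \sum_(j < n) (d i a * d j b) * (d i a' * d j b') = d a a' * d b b'.
Proof.
move=> an bn.
have E : forall i j : nat, (d i a * d j b) * (d i a' * d j b') =
    d i a * (d j b * (d a a' * d b b')).
  move=> i j; rewrite /d; case: (i =P a) => [->|_]; case: (j =P b) => [->|_];
  rewrite /= ?mul0r ?mulr0 ?mul1r ?mulr1 //; ring.
under eq_bigr => i _ do under eq_bigr => j _ do rewrite E.
under eq_bigr => i _ do rewrite -mulr_sumr (sum_d (fun _ => d a a' * d b b') bn).
exact: (sum_d (fun _ => d a a' * d b b') an).
Qed.

Lemma sum4 n (a : R) (f1 f2 f3 f4 : 'I_n -> 'I_n -> R) :
  \sum_(i < n) \sum_(j < n) (a * (f1 i j + f2 i j + f3 i j + f4 i j)) =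
  a * (\sum_(i < n) \sum_(j < n) f1 i j + \sum_(i < n) \sum_(j < n) f2 i j +
       \sum_(i < n) \sum_(j < n) f3 i j + \sum_(i < n) \sum_(j < n) f4 i j).
Proof.
under eq_bigr do rewrite -mulr_sumr !big_split.
by rewrite -mulr_sumr !big_split.
Qed.

Lemma sqrt2_sq : Num.sqrt (2 : R) * Num.sqrt 2 = 2.
Proof. by rewrite -expr2 sqr_sqrtr // ler0n. Qed.

Lemma frob n x y : x \in sym_pairs n -> y \in sym_pairs n ->
  \sum_(i < n) \sum_(j < n) Ef x i j * Ef y i j = (x == y)%:R.
Proof.
case: x => r c; case: y => r' c' /mem_sym /= h1 /mem_sym /= h2.
have rn : (r < n)%N by lia.
have cn : (c < n)%N by lia.
have E : forall i j : nat, Ef (r, c) i j * Ef (r', c') i j = alpha r c * alpha r' c' *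
     ((d i r * d j c) * (d i r' * d j c') + (d i r * d j c) * (d i c' * d j r') +
      (d i c * d j r) * (d i r' * d j c') + (d i c * d j r) * (d i c' * d j r')).
  move=> i j; rewrite /Ef /=; ring.
under eq_bigr => i _ do under eq_bigr => j _ do rewrite E.
rewrite sum4 !dd //.
case: (boolP ((r, c) == (r', c'))) => [/eqP [<- <-] | ne].
  rewrite /d ?eqxx /alpha.
  case: (boolP (r == c)) => [/eqP <-|nrc]; rewrite ?eqxx.
    rewrite (_ : (true%:R : R) = 1) //; by field.
  rewrite eq_sym (negbTE nrc) (_ : (false%:R : R) = 0) // (_ : (true%:R : R) = 1) //.
  rewrite (_ : Num.sqrt 2 / 2 * (Num.sqrt 2 / 2) = (Num.sqrt (2:R) * Num.sqrt 2) / 4);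
    last by field.
  rewrite sqrt2_sq; by field.
have z1 : d r r' * d c c' = 0.
  rewrite /d; case: (r =P r') => [e1|_]; case: (c =P c') => [e2|_];
    rewrite ?mulr0 ?mul0r //.
  by subst; rewrite eqxx in ne.
have z2 : d r c' * d c r' = 0.
  rewrite /d; case: (r =P c') => [e1|_]; case: (c =P r') => [e2|_];
    rewrite ?mulr0 ?mul0r //.
  have [e3 e4] : r = c /\ r' = c' by lia.
  by subst; rewrite eqxx in ne.
rewrite z1 z2 (mulrC (d c r')) (mulrC (d c c')) z1 z2.
by rewrite !addr0 mulr0.
Qed.

End Wsec.

Section W2.
Variable R : realType.
Variable n : nat.
Local Notation W := (Wn R n).
Local Notation d := (@d R).
Local Notation Ef := (@Ef R).
Local Notation alpha := (@alpha R).

Lemma WWt : W *m W^T = 1%:M.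
Proof.
apply/matrixP => l m; rewrite [LHS]mxE [RHS]mxE sum_pk.
under eq_bigr => i _ do under eq_bigr => j _ do rewrite [W^T _ _]mxE !WnE odiv_pk omod_pk.
rewrite exchange_big /= frob; try by rewrite mem_nth // size_sym.
by rewrite /pr nth_uniq ?size_sym // uniq_sym.
Qed.

Lemma sym_half (h : nat -> nat -> R) : (forall r c, h r c = h c r) ->
  \sum_(r < n) \sum_(c < n | (r <= c)%N) alpha r c ^+ 2 * h r c =
  4^-1 * \sum_(r < n) \sum_(c < n) h r c.
Proof.
move=> hC.
have A : \sum_(r < n) \sum_(c < n | (r <= c)%N) alpha r c ^+ 2 * h r c =
   \sum_(r < n) \sum_(c < n) (2^-1 * (((r < c)%N)%:R * h r c) + 4^-1 * ((r == c :> nat)%:R * h r c)).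
  apply: eq_bigr => r _; rewrite big_mkcond; apply: eq_bigr => c _ /=.
  rewrite /alpha; case: (ltngtP r c) => H.
  - rewrite expr2 (_ : Num.sqrt 2 / 2 * (Num.sqrt 2 / 2) = (Num.sqrt (2:R) * Num.sqrt 2) / 4);
      last by field.
    rewrite sqrt2_sq (_ : (true%:R : R) = 1) // (_ : (false%:R : R) = 0) //; by field.
  - by rewrite (_ : (false%:R : R) = 0) // !mul0r !mulr0 addr0.
  - rewrite (_ : (true%:R : R) = 1) // (_ : (false%:R : R) = 0) //.
    rewrite expr2; by field.
have B : \sum_(r < n) \sum_(c < n) (((r < c)%N)%:R * h r c) =
         \sum_(r < n) \sum_(c < n) (((c < r)%N)%:R * h r c).
  rewrite [RHS]exchange_big /=; apply: eq_bigr => r _; apply: eq_bigr => c _.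
  by rewrite hC.
have C : \sum_(r < n) \sum_(c < n) h r c =
   \sum_(r < n) \sum_(c < n) (((r < c)%N)%:R * h r c) +
   \sum_(r < n) \sum_(c < n) (((c < r)%N)%:R * h r c) +
   \sum_(r < n) \sum_(c < n) ((r == c :> nat)%:R * h r c).
  rewrite -!big_split; apply: eq_bigr => r _; rewrite -!big_split; apply: eq_bigr => c _ /=.
  case: (ltngtP r c) => H; rewrite ?eqxx;
  try rewrite (_ : (r == c :> nat) = false); try (by apply/eqP; lia);
  rewrite (_ : (true%:R : R) = 1) // (_ : (false%:R : R) = 0) //; ring.
rewrite A C -B.
under eq_bigr do rewrite big_split /= -!mulr_sumr.
rewrite big_split /= -!mulr_sumr; by field.
Qed.

Definition Pm : 'M[R]_(n * n) :=
  \matrix_(p, q) (((p == q)%:R + (sw p == q)%:R) / 2).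

Lemma eqR (p q : 'I_(n * n)) :
  ((p == q)%:R : R) = d (omod p) (omod q) * d (odiv p) (odiv q).
Proof.
rewrite eq_odiv_omod -!val_eqE /= /d.
by case: (_ == _); case: (_ == _); rewrite /= ?mulr1 ?mulr0 ?mul0r.
Qed.

Lemma WtW : W^T *m W = Pm.
Proof.
apply/matrixP => p q; rewrite [LHS]mxE [RHS]mxE.
under eq_bigr => l _ do rewrite [W^T _ _]mxE !WnE.
rewrite /pr (@sum_sym R n (fun x => Ef x (omod p) (odiv p) * Ef x (omod q) (odiv q))).
set a1 := val (omod p); set a2 := val (odiv p); set b1 := val (omod q); set b2 := val (odiv q).
have E : forall r c : nat, Ef (r, c) a1 a2 * Ef (r, c) b1 b2 = alpha r c ^+ 2 *
   ((d r a1 * d c a2) * (d r b1 * d c b2) + (d r a1 * d c a2) * (d r b2 * d c b1) +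
    (d r a2 * d c a1) * (d r b1 * d c b2) + (d r a2 * d c a1) * (d r b2 * d c b1)).
  move=> r c; rewrite /Ef /= (@dC R a1 r) (@dC R a1 c) (@dC R a2 r) (@dC R a2 c).
  rewrite (@dC R b1 r) (@dC R b1 c) (@dC R b2 r) (@dC R b2 c); ring.
under eq_bigr => r _ do under eq_bigr => c _ do rewrite E.
rewrite (@sym_half (fun r c : nat =>
   ((d r a1 * d c a2) * (d r b1 * d c b2) + (d r a1 * d c a2) * (d r b2 * d c b1) +
    (d r a2 * d c a1) * (d r b1 * d c b2) + (d r a2 * d c a1) * (d r b2 * d c b1)))); last first.
  by move=> r c; ring.
under eq_bigr do rewrite !big_split /=. rewrite !big_split /= !dd ?ltn_ord //.
rewrite eqR (eqR (sw p)) odiv_sw omod_sw -/a1 -/a2 -/b1 -/b2.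
rewrite (@dC R a2 b1) (@dC R b1 a2) ; by field.
Qed.
End W2.

Section Pow.
Variable R : realType.
Variable n : nat.
Local Notation W := (Wn R n).
Local Notation Pm := (@Pm R n).

Definition swinv (S : 'M[R]_(n * n)) := forall p q, S (sw p) (sw q) = S p q.

Lemma sum_delta (F : 'I_(n * n) -> R) q :
  \sum_k (k == q)%:R * F k = F q.
Proof.
rewrite (bigD1 q) //= eqxx mul1r big1 ?addr0 // => k /negbTE ->; by rewrite mul0r.
Qed.

Definition Tm : 'M[R]_(n * n) := \matrix_(p, q) (sw p == q)%:R.

Lemma PmE : Pm = 2^-1 *: (1%:M + Tm).
Proof. by apply/matrixP => p q; rewrite !mxE mulrC. Qed.

Lemma TmS (S : 'M[R]_(n * n)) p q : (Tm *m S) p q = S (sw p) q.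
Proof.
rewrite mxE; under eq_bigr => k _ do rewrite mxE.
by rewrite (bigD1 (sw p)) //= eqxx mul1r big1 ?addr0 // => k /negbTE; rewrite eq_sym => ->; rewrite mul0r.
Qed.
Lemma STm (S : 'M[R]_(n * n)) p q : (S *m Tm) p q = S p (sw q).
Proof.
rewrite mxE; under eq_bigr => k _ do rewrite mxE.
have h : forall k, (sw k == q) = (k == sw q).
  by move=> k; apply/eqP/eqP => [<-|->]; rewrite swK.
under eq_bigr => k _ do rewrite h.
by rewrite (bigD1 (sw q)) //= eqxx mulr1 big1 ?addr0 // => k /negbTE => ->; rewrite mulr0.
Qed.

Lemma Pm_comm S : swinv S -> Pm *m S = S *m Pm.
Proof.
move=> hS; rewrite PmE -scalemxAl -scalemxAr mulmxDl mulmxDr mul1mx mulmx1.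
congr (_ *: (_ + _)); apply/matrixP => p q.
by rewrite TmS STm -[in LHS](swK q) hS.
Qed.

Lemma WPm : W *m Pm = W.
Proof. by rewrite -(@WtW R n) mulmxA (@WWt R n) mul1mx. Qed.
Lemma PmWt : Pm *m W^T = W^T.
Proof. by rewrite -(@WtW R n) -mulmxA (@WWt R n) mulmx1. Qed.

Lemma swinv1 : swinv 1%:M.
Proof. by move=> p q; rewrite !mxE (inj_eq (@sw_inj n)). Qed.
Lemma swinvM S T : swinv S -> swinv T -> swinv (S *m T).
Proof.
move=> hS hT p q; rewrite !mxE (reindex_inj (@sw_inj n)) /=.
by apply: eq_bigr => k _; rewrite hS hT.
Qed.
Lemma swinvX S k : swinv S -> swinv (S ^+ k).
Proof.
move=> hS; elim: k => [|k IH]; first exact: swinv1.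
by rewrite exprS -mulmxE; apply: swinvM.
Qed.
Lemma swinvD S T : swinv S -> swinv T -> swinv (S + T).
Proof. by move=> hS hT p q; rewrite !mxE hS hT. Qed.
Lemma swinvZ a S : swinv S -> swinv (a *: S).
Proof. by move=> hS p q; rewrite !mxE hS. Qed.

Lemma pow_conj S k : swinv S -> (W *m S *m W^T) ^+ k = W *m (S ^+ k) *m W^T.
Proof.
move=> hS; elim: k => [|k IH].
  by rewrite !expr0 mulmx1 (@WWt R n).
rewrite exprSr IH -mulmxE exprSr -mulmxE.
rewrite !mulmxA -(mulmxA _ W^T W) (@WtW R n) -(mulmxA _ Pm S) (Pm_comm hS).
rewrite mulmxA -(mulmxA _ Pm W^T) PmWt.
by [].
Qed.

End Pow.

Section PartA.
Variable R : realType.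
Variable n : nat.
Local Notation W := (Wn R n).

Lemma trE m1 m2 (A : 'M[R]_(m1, m2)) i j : A^T i j = A j i.
Proof. by rewrite mxE. Qed.
Lemma mulE m1 m2 m3 (A : 'M[R]_(m1, m2)) (B : 'M[R]_(m2, m3)) i j :
  (A *m B) i j = \sum_k A i k * B k j.
Proof. by rewrite mxE. Qed.

Lemma addE m1 m2 (A B : 'M[R]_(m1, m2)) i j : (A + B) i j = A i j + B i j.
Proof. by rewrite mxE. Qed.

Lemma conj_sw (X : 'M[R]_(n * n)) :
  W *m X *m W^T = W *m (\matrix_(p, q) X (sw p) (sw q)) *m W^T.
Proof.
apply/matrixP => l m; rewrite !mulE (reindex_inj (@sw_inj n)) /=.
apply: eq_bigr => k _; rewrite !mulE !trE (reindex_inj (@sw_inj n)) /= Wn_sw.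
congr (_ * _); apply: eq_bigr => p _; by rewrite [in RHS]mxE Wn_sw.
Qed.

Lemma symkronC (A B : 'M[R]_n) : symkron A B = symkron B A.
Proof.
rewrite /symkron conj_sw; congr (_ *m _ *m _).
by apply/matrixP => p q; rewrite [LHS]mxE kron_sw.
Qed.

Lemma symkron_conj (A B : 'M[R]_n) : symkron A B = W *m kron A B *m W^T.
Proof. by []. Qed.

Lemma swinv_M (A : 'M[R]_n) : swinv (kron A 1%:M + kron 1%:M A).
Proof. by move=> p q; rewrite !addE !kron_sw addrC. Qed.

Lemma conj_lin a (X Y : 'M[R]_(n * n)) :
  W *m (a *: X + Y) *m W^T = a *: (W *m X *m W^T) + W *m Y *m W^T.
Proof. by rewrite mulmxDr mulmxDl -scalemxAr -scalemxAl. Qed.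

Lemma conj_sum I (r : seq I) (F : I -> 'M[R]_(n * n)) :
  W *m (\sum_(i <- r) F i) *m W^T = \sum_(i <- r) W *m F i *m W^T.
Proof. by rewrite mulmx_sumr mulmx_suml. Qed.

Lemma symkron1A (A : 'M[R]_n) :
  symkron 1%:M A = W *m (2^-1 *: (kron A 1%:M + kron 1%:M A)) *m W^T.
Proof.
rewrite -[2^-1 *: _]addr0 conj_lin mulmx0 mul0mx addr0 mulmxDr mulmxDl.
rewrite -!symkron_conj (symkronC A 1%:M) -mulr2n -scalerMnr scalerMnl -mulr_natr mulVf ?scale1r //.
Qed.

Lemma exprZmx m a (B : 'M[R]_m) k : (a *: B) ^+ k = a ^+ k *: B ^+ k.
Proof.
elim: k => [|k IH]; first by rewrite !expr0 scale1r.
by rewrite !exprS IH -!mulmxE -scalemxAr -scalemxAl scalerA (mulrC (a ^+ k)).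
Qed.

Lemma partA (A : 'M[R]_n) k :
  (symkron A 1%:M) ^+ k = (symkron 1%:M A) ^+ k /\
  (symkron 1%:M A) ^+ k =
    (2 ^+ k)^-1 *: \sum_(i < k.+1) ('C(k, i))%:R *: symkron (A ^+ (k - i)) (A ^+ i).
Proof.
split; first by rewrite symkronC.
rewrite symkron1A pow_conj; last by apply: swinvZ; apply: swinv_M.
rewrite exprZmx exprDn_comm; last first.
  by rewrite /GRing.comm -!mulmxE kron_comm.
rewrite -[_ *: \sum_(i < k.+1) _]addr0 conj_lin mulmx0 mul0mx addr0 conj_sum exprVn.
congr (_ *: _); apply: eq_bigr => i _.
rewrite -mulmxE kron_expl kron_expr kron_split -scaler_nat.
by rewrite -[_ *: kron _ _]addr0 conj_lin mulmx0 mul0mx addr0.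
Qed.

End PartA.

Section Norms.
Variable R : realType.

Lemma nmx_entry m1 m2 (X : 'M[R]_(m1, m2)) i j : `|X i j| <= `|X|.
Proof.
rewrite [leRHS]/Num.Def.normr /= mx_normrE; apply/bigmax_geP; right; by exists (i, j).
Qed.

Lemma nmx_le m1 m2 (X : 'M[R]_(m1, m2)) c : 0 <= c ->
  (forall i j, `|X i j| <= c) -> `|X| <= c.
Proof.
move=> c0 H; rewrite [leLHS]/Num.Def.normr /= mx_normrE.
by apply: bigmax_le => // -[i j] _; exact: H.
Qed.

Lemma nmx_mul m1 k m2 (X : 'M[R]_(m1, k)) (Y : 'M[R]_(k, m2)) :
  `|X *m Y| <= k%:R * `|X| * `|Y|.
Proof.
apply: nmx_le => [|i j]; first by rewrite !mulr_ge0.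
rewrite mxE; apply: le_trans (ler_norm_sum _ _ _) _.
apply: le_trans (_ : \sum_(t < k) `|X| * `|Y| <= _); last first.
  by rewrite sumr_const card_ord -[in leLHS]mulr_natl mulrA.
apply: ler_sum => t _; rewrite normrM.
by apply: ler_pM => //; exact: nmx_entry.
Qed.

Lemma nmx_kron n (A B : 'M[R]_n) : `|kron A B| <= `|A| * `|B|.
Proof.
apply: nmx_le => [|p q]; first by rewrite mulr_ge0.
by rewrite kronE normrM; apply: ler_pM => //; exact: nmx_entry.
Qed.

Lemma nmx1 m : `|(1%:M : 'M[R]_m)| <= 1.
Proof.
apply: nmx_le => // i j; rewrite mxE; case: (i == j); by rewrite /= ?normr1 ?normr0.
Qed.

Lemma nmx_pow m (X : 'M[R]_m) k : `|X ^+ k| <= (m%:R * `|X|) ^+ k.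
Proof.
elim: k => [|k IH]; first by rewrite !expr0 nmx1.
rewrite !exprS -mulmxE; apply: le_trans (nmx_mul _ _) _.
by apply: ler_pM => //; rewrite mulr_ge0.
Qed.

Definition eser m (A : 'M[R]_m) := fun k : nat => (k`!%:R)^-1 *: A ^+ k.

Lemma nmx_eser m (A : 'M[R]_m) k : `|eser A k| <= exp_coeff (m%:R * `|A|) k.
Proof.
rewrite /eser normrZ /exp_coeff /= mulrC ger0_norm ?invr_ge0 ?ler0n //.
by apply: ler_wpM2r; [rewrite invr_ge0 ler0n | exact: nmx_pow].
Qed.

Lemma mexp_cvg m (A : 'M[R]_m) : cvgn (series (eser A)).
Proof.
set c := m%:R * `|A|.
apply/cauchy_cvgP/cauchy_seriesP => e e0.
have := is_cvg_series_exp_coeff c => /cauchy_cvgP /cauchy_seriesP /(_ e e0).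
apply: filterS => -[a b] /= H; apply: le_lt_trans H.
apply: le_trans (ler_norm_sum _ _ _) _.
apply: le_trans (ler_norm _); apply: ler_sum => k _; exact: nmx_eser.
Qed.

End Norms.

Section CP.
Variable V : pzRingType.

Lemma triangle (G : nat -> nat -> V) K :
  \sum_(0 <= s < K) \sum_(0 <= i < s.+1) G i (s - i)%N =
  \sum_(0 <= i < K) \sum_(0 <= j < (K - i)%N) G i j.
Proof.
elim: K => [|K IH]; first by rewrite !big_geq.
rewrite big_nat_recr //= IH [RHS]big_nat_recr //= subSnn big_nat1.
rewrite (eq_big_nat _ _ (F1 := fun i => \sum_(0 <= j < (K.+1 - i)%N) G i j)
   (F2 := fun i => \sum_(0 <= j < (K - i)%N) G i j + G i (K - i)%N)); last first.
  by move=> i /andP[_ iK]; rewrite subSn 1?ltnW // big_nat_recr.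
rewrite big_split /= big_nat_recr //= subnn.
by rewrite !addrA.
Qed.

Definition Es (w : nat -> V) K X := \sum_(0 <= k < K) w k * X ^+ k.

Lemma cauchy_id (w : nat -> V) (wc : forall k Z, w k * Z = Z * w k)
  (wb : forall i j, w (i + j)%N *+ 'C((i + j)%N, i) = w i * w j)
  (X Y : V) (cXY : GRing.comm X Y) K :
  Es w K X * Es w K Y - Es w K (X + Y) =
  \sum_(0 <= i < K) \sum_((K - i)%N <= j < K) w i * w j * (X ^+ i * Y ^+ j).
Proof.
have cP : forall a b, X ^+ a * Y ^+ b = Y ^+ b * X ^+ a.
  move=> a b; apply: commr_sym; apply: commrX; apply: commr_sym; exact: commrX.
have E1 : Es w K (X + Y) =
   \sum_(0 <= s < K) \sum_(0 <= i < s.+1) w i * w (s - i)%N * (X ^+ i * Y ^+ (s - i)%N).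
  apply: eq_bigr => s _; rewrite addrC exprDn_comm; last exact: commr_sym.
  rewrite big_distrr /= big_mkord; apply: eq_bigr => i _.
  rewrite mulrnAr -mulrnAl -cP; congr (_ * _).
  have h := wb i (s - i)%N; rewrite (subnKC (ltnSE (ltn_ord i))) in h; exact h.
have E2 : Es w K X * Es w K Y =
   \sum_(0 <= i < K) \sum_(0 <= j < K) w i * w j * (X ^+ i * Y ^+ j).
  rewrite /Es big_distrl /=; apply: eq_bigr => i _.
  rewrite big_distrr /=; apply: eq_bigr => j _.
  by rewrite -!mulrA (mulrA (X ^+ i)) -wc !mulrA.
rewrite E2 E1 (triangle (fun i j => w i * w j * (X ^+ i * Y ^+ j))) -sumrB; apply: eq_bigr => i _.
rewrite (@big_cat_nat _ _ _ (K - i)%N) ?leq_subr //=.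
by rewrite addrAC subrr add0r.
Qed.
End CP.

Local Open Scope classical_set_scope.
Local Open Scope ring_scope.

Section B.
Variable R : realType.

Definition wR (k : nat) : R := (k`!%:R)^-1.

Lemma fact_neq0 k : (k`!%:R : R) != 0.
Proof. by rewrite pnatr_eq0 -lt0n fact_gt0. Qed.

Lemma wbR i j : wR (i + j)%N *+ 'C((i + j)%N, i) = wR i * wR j.
Proof.
have h := bin_fact (leq_addr j i); rewrite addKn in h.
rewrite /wR -mulr_natr -h !natrM.
have c0 : ('C((i + j)%N, i)%:R : R) != 0 by rewrite pnatr_eq0 -lt0n bin_gt0 leq_addr.
by field; rewrite c0 !fact_neq0.
Qed.

Definition wM m (k : nat) : 'M[R]_m := (wR k)%:M.

Lemma wcM m k (Z : 'M[R]_m) : wM m k * Z = Z * wM m k.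
Proof. by rewrite -!mulmxE scalar_mxC. Qed.

Lemma wbM m i j : wM m (i + j)%N *+ 'C((i + j)%N, i) = wM m i * wM m j.
Proof. by rewrite /wM -raddfMn /= wbR -mulmxE scalar_mxM. Qed.

Lemma EsM m K (X : 'M[R]_m) : Es (wM m) K X = series (eser X) K.
Proof.
by rewrite /Es /series /=; apply: eq_bigr => k _; rewrite -mulmxE mul_scalar_mx.
Qed.

Lemma EsR K (c : R) : Es wR K c = series (exp_coeff c) K.
Proof. by rewrite /Es /series /=; apply: eq_bigr => k _; rewrite /wR /exp_coeff /= mulrC. Qed.

Lemma EsR_cvg (c : R) : (fun K => Es wR K c) @ \oo --> expR c.
Proof.
have -> : (fun K => Es wR K c) = series (exp_coeff c) by apply/funext => K; exact: EsR.
exact: is_cvg_series_exp_coeff.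
Qed.

Lemma cvg_by_bound (V : normedModType R) (u : nat -> V) (l : V) (b : nat -> R) :
  (forall K, `|u K - l| <= b K) -> b @ \oo --> (0:R) -> u @ \oo --> l.
Proof.
move=> H /cvgrPdist_le hb; apply/cvgrPdist_le => e e0.
move: (hb e e0); apply: filterS => K; rewrite sub0r normrN => hK.
by rewrite distrC; apply: le_trans (H K) _; apply: le_trans (ler_norm _) hK.
Qed.

Lemma cvg0M (u v : nat -> R) (l : R) : u @ \oo --> (0:R) -> v @ \oo --> l ->
  (fun K => u K * v K) @ \oo --> (0:R).
Proof. move=> hu hv; have h := cvgM hu hv; rewrite mul0r in h; exact: h. Qed.
Lemma cvg0Mr (u v : nat -> R) (l : R) : u @ \oo --> l -> v @ \oo --> (0:R) ->
  (fun K => u K * v K) @ \oo --> (0:R).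
Proof. move=> hu hv; have h := cvgM hu hv; rewrite mulr0 in h; exact: h. Qed.
Lemma cvg0D (u v : nat -> R) : u @ \oo --> (0:R) -> v @ \oo --> (0:R) ->
  (fun K => u K + v K) @ \oo --> (0:R).
Proof. move=> hu hv; have h := cvgD hu hv; rewrite addr0 in h; exact: h. Qed.
Lemma cvg0Ml (a : R) (u : nat -> R) : u @ \oo --> (0:R) -> (fun K => a * u K) @ \oo --> (0:R).
Proof. move=> hu; exact: (cvg0Mr (cvg_cst a) hu). Qed.

End B.

Local Open Scope classical_set_scope.
Local Open Scope ring_scope.

Section B2.
Variable R : realType.
Variable n : nat.
Local Notation W := (Wn R n).

Definition cW : R := (n * n)%:R * (n * n)%:R * `|W| * `|W^T|.

Lemma nconj (X : 'M[R]_(n * n)) : `|W *m X *m W^T| <= cW * `|X|.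
Proof.
apply: le_trans (nmx_mul _ _) _.
have h := nmx_mul W X.
rewrite /cW (_ : (n * n)%:R * (n * n)%:R * `|W| * `|W^T| * `|X| =
   (n * n)%:R * ((n * n)%:R * `|W| * `|X|) * `|W^T|); last by ring.
by apply: ler_wpM2r => //; apply: ler_wpM2l => //.
Qed.

Lemma mexpE m (A : 'M[R]_m) : mexp A = limn (series (eser A)).
Proof. by []. Qed.

Lemma SA_cvg m (A : 'M[R]_m) : series (eser A) @ \oo --> mexp A.
Proof. exact: mexp_cvg. Qed.

Lemma partB (A : 'M[R]_n) : mexp (symsum A A) = symkron (mexp A) (mexp A).
Proof.
set M := kron A 1%:M; set N := kron 1%:M A; set Z := M + N.
set L := mexp A.
set SA := series (eser A).
set c := n%:R * `|A|.
have hZ : swinv Z := swinv_M A.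
have hsym : symsum A A = W *m Z *m W^T by rewrite /symsum /symkron mulmxDr mulmxDl.
have hS : forall K, series (eser (symsum A A)) K = W *m series (eser Z) K *m W^T.
  move=> K; rewrite hsym /series /= conj_sum; apply: eq_bigr => k _.
  by rewrite /eser pow_conj // -scalemxAr -scalemxAl.
have cMN : GRing.comm M N by rewrite /GRing.comm -!mulmxE kron_comm.
set Dm := fun K => \sum_(0 <= i < K) \sum_((K - i)%N <= j < K)
     @wM R (n * n)%N i * @wM R (n * n)%N j * (M ^+ i * N ^+ j).
have hEM : forall K, Es (@wM R (n * n)%N) K M = kron (SA K) 1%:M.
  move=> K; rewrite EsM /SA /series /= kron_suml; apply: eq_bigr => k _.
  by rewrite /eser kron_expl kronZl.
have hEN : forall K, Es (@wM R (n * n)%N) K N = kron 1%:M (SA K).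
  move=> K; rewrite EsM /SA /series /= kron_sumr; apply: eq_bigr => k _.
  by rewrite /eser kron_expr kronZr.
have hD : forall K, series (eser Z) K = kron (SA K) (SA K) - Dm K.
  move=> K; have h := cauchy_id (@wcM R (n * n)) (@wbM R (n * n)) cMN K.
  rewrite -EsM /Dm -h hEM hEN -mulmxE kron_split.
  by rewrite opprB addrC subrK.
have nM : forall i, `|M ^+ i| <= c ^+ i.
  move=> i; rewrite /M kron_expl; apply: le_trans (nmx_kron _ _) _.
  rewrite -[c ^+ i]mulr1; apply: ler_pM => //; [exact: nmx_pow | exact: nmx1].
have nN : forall i, `|N ^+ i| <= c ^+ i.
  move=> i; rewrite /N kron_expr; apply: le_trans (nmx_kron _ _) _.
  rewrite -[c ^+ i]mul1r; apply: ler_pM => //; [exact: nmx1 | exact: nmx_pow].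
set dK := fun K => \sum_(0 <= i < K) \sum_((K - i)%N <= j < K)
   @wR R i * @wR R j * (c ^+ i * c ^+ j).
have hdK : forall K, dK K = Es (@wR R) K c * Es (@wR R) K c - Es (@wR R) K (c + c).
  move=> K; rewrite (@cauchy_id _ (@wR R) (fun k Z => mulrC _ _) (@wbR R)) //.
have wR0 : forall i, 0 <= (@wR R) i by move=> i; rewrite /wR invr_ge0 ler0n.
have nD : forall K, `|Dm K| <= (n * n)%:R * dK K.
  move=> K; rewrite /Dm /dK mulr_sumr; apply: le_trans (ler_norm_sum _ _ _) _.
  apply: ler_sum => i _.
  rewrite mulr_sumr; apply: le_trans (ler_norm_sum _ _ _) _; apply: ler_sum => j _.
  rewrite /wM -mulmxE -scalar_mxM. rewrite mul_scalar_mx normrZ.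
  rewrite ger0_norm; last by rewrite mulr_ge0.
  apply: le_trans (_ : @wR R i * @wR R j * ((n * n)%:R * `|M ^+ i| * `|N ^+ j|) <= _).
    by apply: ler_wpM2l; [rewrite mulr_ge0 | exact: nmx_mul].
  rewrite (_ : (n * n)%:R * (@wR R i * @wR R j * (c ^+ i * c ^+ j)) =
     @wR R i * @wR R j * ((n * n)%:R * c ^+ i * c ^+ j)); last by ring.
  apply: ler_wpM2l; first by rewrite mulr_ge0.
  apply: ler_pM; [by rewrite mulr_ge0 | by [] | | exact: nN].
  by apply: ler_wpM2l => //; exact: nM.
have cW0 : 0 <= cW by rewrite /cW !mulr_ge0.
have hb : forall K, `|series (eser (symsum A A)) K - symkron L L| <=
    cW * ((`|SA K - L| * `|SA K| + `|L| * `|SA K - L|) + (n * n)%:R * dK K).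
  move=> K; rewrite hS hD symkron_conj -mulmxBl -mulmxBr.
  have -> : kron (SA K) (SA K) - Dm K - kron L L =
      (kron (SA K - L) (SA K) + kron L (SA K - L)) - Dm K.
    by rewrite kronBl kronBr addrA subrK addrAC.
  apply: le_trans (nconj _) _; apply: ler_wpM2l => //.
  apply: le_trans (ler_normB _ _) _.
  apply: lerD; last exact: nD.
  apply: le_trans (ler_normD _ _) _; apply: lerD; exact: nmx_kron.
have h1 : (fun K => `|SA K - L|) @ \oo --> (0:R).
  have h := cvg_norm (cvgB (SA_cvg (A:=A)) (cvg_cst L)).
  rewrite subrr normr0 in h; exact: h.
have h2 : (fun K => `|SA K|) @ \oo --> `|L| by exact: cvg_norm (SA_cvg (A:=A)).
have hd : dK @ \oo --> (0:R).
  have h := cvgB (cvgM (EsR_cvg (c:=c)) (EsR_cvg (c:=c))) (EsR_cvg (c:=c + c)).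
  rewrite -expRD subrr in h.
  have -> : dK = (fun K => Es (@wR R) K c * Es (@wR R) K c - Es (@wR R) K (c + c)).
    by apply/funext => K; exact: hdK.
  exact: h.
have cb : (fun K => cW * ((`|SA K - L| * `|SA K| + `|L| * `|SA K - L|) + (n * n)%:R * dK K))
   @ \oo --> (0:R).
  apply: cvg0Ml; apply: cvg0D; last exact: cvg0Ml.
  apply: cvg0D; first exact: cvg0M h1 h2.
  exact: cvg0Mr (cvg_cst _) h1.
apply: cvg_lim; first exact: norm_hausdorff.
exact: cvg_by_bound hb cb.
Qed.
End B2.

Local Open Scope classical_set_scope.
Local Open Scope ring_scope.


Lemma scE (R : realType) m1 m2 (a : R) (A : 'M[R]_(m1, m2)) i j : (a *: A) i j = a * A i j.
Proof. by rewrite mxE. Qed.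

Section C.
Variable R : realType.

Lemma sym_pairs2 : sym_pairs 2 = [:: (0, 0); (0, 1); (1, 1)]%N.
Proof. by []. Qed.

Definition A2 : 'M[R]_2 := delta_mx 0 1.

Lemma entry02 : symkron A2 A2 (@Ordinal (tri 2) 0 isT) (@Ordinal (tri 2) 2 isT) = 1.
Proof.
rewrite /symkron mulE sum_pk.
under eq_bigr => i _ do under eq_bigr => j _ do rewrite mulE sum_pk trE WnE odiv_pk omod_pk.
under eq_bigr => i _ do under eq_bigr => j _ do under eq_bigr => i' _ do under eq_bigr => j' _ do
  rewrite WnE kronE !odiv_pk !omod_pk.
rewrite /pr sym_pairs2 /= /A2.
rewrite !big_ord_recr !big_ord0 /= !mxE /=.
rewrite /Ef /d /alpha /=.
by field.
Qed.

Lemma symkron0l n (X : 'M[R]_n) : symkron 0 X = 0.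
Proof. by rewrite /symkron kron0l mulmx0 mul0mx. Qed.
Lemma symkron0r n (X : 'M[R]_n) : symkron X 0 = 0.
Proof. by rewrite /symkron kron0r mulmx0 mul0mx. Qed.
Lemma symkronDl n (X Y Z : 'M[R]_n) : symkron (X + Y) Z = symkron X Z + symkron Y Z.
Proof. by rewrite /symkron kronDl mulmxDr mulmxDl. Qed.
Lemma symkron11 n : symkron (1%:M : 'M[R]_n) 1%:M = 1%:M.
Proof. by rewrite /symkron kron11 mulmx1 WWt. Qed.

Lemma mexp_nil m (X : 'M[R]_m) K0 : (forall k, (K0 <= k)%N -> X ^+ k = 0) ->
  mexp X = series (eser X) K0.
Proof.
move=> H; apply: lim_near_cst; first exact: norm_hausdorff.
exists K0 => // K /= hK.
rewrite /series /= (@big_cat_nat _ _ _ K0) //= [X in _ + X]big1_seq ?addr0 //.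
move=> k /andP[_]; rewrite mem_index_iota => /andP[hk _].
by rewrite /eser H // scaler0.
Qed.

Lemma A2sq : A2 ^+ 2 = 0.
Proof. by rewrite expr2 -mulmxE /A2 mul_delta_mx_cond. Qed.
Lemma A2pow k : (2 <= k)%N -> A2 ^+ k = 0.
Proof. by move=> hk; rewrite -(subnKC hk) exprD A2sq mul0r. Qed.

Lemma Q3 k : (3 <= k)%N -> (symkron A2 1%:M) ^+ k = 0.
Proof.
move=> hk; have [-> ->] := partA A2 k.
rewrite big1 ?scaler0 // => i _.
case: (leqP 2 (k - i)) => h.
  by rewrite A2pow // symkron0l scaler0.
by rewrite (A2pow (k := i)) ?symkron0r ?scaler0 //; lia.
Qed.

Theorem partC : exists (n : nat) (A B : 'M[R]_n), mexp (symsum A B) <> symkron (mexp A) (mexp B).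
Proof.
exists 2%N, A2, 0 => H.
set Q := symkron A2 1%:M.
have hs : symsum A2 0 = Q by rewrite /symsum symkron0r addr0.
have e1 : mexp Q = 1 + Q + 2^-1 *: Q ^+ 2.
  rewrite (mexp_nil (K0 := 3) (@Q3)) /series /= !big_nat_recr //= big_geq // add0r.
  by rewrite /eser !factS fact0 /= !muln1 mulr1n invr1 expr0 expr1 !scale1r.
have e2 : mexp A2 = 1 + A2.
  rewrite (mexp_nil (K0 := 2) A2pow) /series /= !big_nat_recr //= big_geq // add0r.
  by rewrite /eser !factS fact0 /= !muln1 mulr1n invr1 expr0 expr1 !scale1r.
have e3 : mexp (0 : 'M[R]_2) = 1.
  rewrite (mexp_nil (K0 := 1)); last by move=> k hk; rewrite expr0n; case: k hk.
  rewrite /series /= big_nat_recr //= big_geq // add0r.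
  by rewrite /eser fact0 invr1 expr0 scale1r.
rewrite hs e1 e2 e3 symkronDl symkron11 -/Q in H.
have H' : 2^-1 *: Q ^+ 2 = 0.
  by apply: (@addrI _ (1 + Q)); rewrite addr0.
have [hQ1 hQ2] := partA A2 2.
rewrite /Q hQ1 hQ2 !big_ord_recr big_ord0 /= in H'.
rewrite subn0 subnn (_ : (2 - 1)%N = 1%N) // A2sq symkron0l symkron0r expr1 bin1 in H'.
rewrite !scaler0 !add0r ?addr0 in H'.
have h := congr1 (fun M : 'M[R]_(tri 2) => M (@Ordinal (tri 2) 0 isT) (@Ordinal (tri 2) 2 isT)) H'.
rewrite /= !scE entry02 mxE in h.
have e : (2:R)^-1 * ((2 ^+ 2)^-1 * (2%:R * 1)) = 4^-1 by field.
rewrite e in h; move/eqP: h; by rewrite invr_eq0 pnatr_eq0.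
Qed.

End C.


Local Close Scope classical_set_scope.
Local Open Scope ring_scope.
Unset Implicit Arguments.

Theorem proposition8 (R : realType) :
  (forall (n : nat) (A : 'M[R]_n),
     (forall k : nat,
        (symkron A 1%:M) ^+ k = (symkron 1%:M A) ^+ k /\
        (symkron 1%:M A) ^+ k =
          (2 ^+ k)^-1 *: \sum_(i < k.+1) ('C(k, i))%:R *: symkron (A ^+ (k - i)) (A ^+ i))
     /\ mexp (symsum A A) = symkron (mexp A) (mexp A))
  /\ (exists (n : nat) (A B : 'M[R]_n), mexp (symsum A B) <> symkron (mexp A) (mexp B)).
Proof.
split; last exact: partC.
move=> n A; split; last exact: partB.
move=> k; exact: partA.
Qed.
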